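(* Let $X$ be a complete separable metric space, identified with its image under a fixed isometric embedding $\iota:X\to\ell_\infty(\mathbb{N})$. Let $(K_n)_{n\in\mathbb{N}}$ be a sequence of non-empty compact subsets of $X$ with $K_n\subset K_m$ for $n\le m$, let $M,L,\Delta>0$, and let $h_n:\ell_\infty(\mathbb{N})\to[0,\infty)$, $h_n(x)=\sum_{k=1}^n\min\{n\,d(x,K_k),1\}$. If $(P^i=(p^i_0,\dots,p^i_{n(i)}))_{i\in\mathbb{N}}$ is a sequence of discrete paths in $X$ with $\lim_{i\to\infty}\mathrm{Mesh}(P^i)=0$, $\mathrm{Len}(P^i)\le L$, $\mathrm{diam}(P^i)\ge\Delta$ and $\sum_{k=0}^{n(i)-1}h_i(p^i_k)d(p^i_k,p^i_{k+1})\le M$ for every $i$, then a subsequence of $(P^i)$ converges to a curve $\gamma:[0,1]\to X$.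
   Context: A discrete path is a sequence $P=(p_0,\dots,p_n)$ of points of $X$ with $n\ge1$; $\mathrm{Mesh}(P)=\max_{k\le n-1}d(p_k,p_{k+1})$, $\mathrm{diam}(P)=\max_{k,l}d(p_k,p_l)$, $\mathrm{Len}(P)=\sum_{k=0}^{n-1}d(p_k,p_{k+1})$. Distances $d(x,K)=\inf_{a\in K}d(x,a)$ are taken in $\ell_\infty(\mathbb{N})$. The linearly interpolating curve $\gamma_P:[0,1]\to\ell_\infty(\mathbb{N})$ is constant $p_0$ if $\mathrm{Len}(P)=0$; otherwise with $t_0=0$, $t_k=\sum_{i=0}^{k-1}d(p_i,p_{i+1})/\mathrm{Len}(P)$, $\gamma_P(t_k)=p_k$ and $\gamma_P$ is affine on each $[t_k,t_{k+1}]$ with $t_k<t_{k+1}$. A sequence of discrete paths $P^i$ converges to a curve $\gamma:[0,1]\to X$ if $\gamma_{P^i}\to\gamma$ uniformly and $\mathrm{Mesh}(P^i)\to0$. *)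

(* Defs.v *)
(* l_oo(N) is modelled as the bounded real
   sequences (nat -> R, R : realType) with the sup distance. *)
From HB Require Import structures.
From mathcomp Require Import all_boot all_order all_algebra.
From mathcomp Require Import all_classical all_reals.
From mathcomp Require Import topology normedtype.
Import numFieldNormedType.Exports.
Set Implicit Arguments. Unset Strict Implicit. Unset Printing Implicit Defensive.
Import Order.TTheory GRing.Theory Num.Theory.
Local Open Scope classical_set_scope.
Local Open Scope ring_scope.

Section Linf.
Variable R : realType.

Definition linf := nat -> R.

Definition bounded_seq (x : linf) : Prop := exists C : R, forall j, `|x j| <= C.

Definition ldist (x y : linf) : R := sup (range (fun j => `|x j - y j|)).

Definition setdist (x : linf) (K : set linf) : R :=
  inf [set ldist x a | a in K].

Definition complete_sub (X : set linf) : Prop :=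
  forall u : nat -> linf, (forall k, X (u k)) ->
    (forall e : R, 0 < e -> exists N, forall k l, (N <= k)%N -> (N <= l)%N ->
        ldist (u k) (u l) < e) ->
    exists2 x, X x & forall e : R, 0 < e -> exists N, forall k, (N <= k)%N ->
        ldist (u k) x < e.

Definition separable_sub (X : set linf) : Prop :=
  exists D : nat -> linf, (forall k, X (D k)) /\
    forall x, X x -> forall e : R, 0 < e -> exists k, ldist x (D k) < e.

Definition compact_sub (K : set linf) : Prop :=
  forall u : nat -> linf, (forall k, K (u k)) ->
    exists phi : nat -> nat, (forall k, (phi k < phi k.+1)%N) /\
      exists2 x, K x & forall e : R, 0 < e -> exists N, forall k, (N <= k)%N ->
        ldist (u (phi k)) x < e.

(* A discrete path P = (p 0, ..., p n), n >= 1, is given by (n, p). *)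
Definition Mesh (n : nat) (p : nat -> linf) : R :=
  \big[Num.max/0]_(k < n) ldist (p k) (p k.+1).

Definition diam (n : nat) (p : nat -> linf) : R :=
  \big[Num.max/0]_(k < n.+1) \big[Num.max/0]_(l < n.+1) ldist (p k) (p l).

Definition Len (n : nat) (p : nat -> linf) : R :=
  \sum_(k < n) ldist (p k) (p k.+1).

Definition tk (n : nat) (p : nat -> linf) (k : nat) : R :=
  (\sum_(i < k) ldist (p i) (p i.+1)) / Len n p.

Definition seg_param (n : nat) (p : nat -> linf) (k : nat) (t : R) : R :=
  if tk n p k < tk n p k.+1 then
    Num.min 1 (Num.max 0 ((t - tk n p k) / (tk n p k.+1 - tk n p k)))
  else 0.

(* The linearly interpolating curve gamma_P : [0,1] -> l_oo (given on all of R;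
   only its values on [0,1] matter).  On [t_k, t_{k+1}] (with t_k < t_{k+1}) it
   is the affine map from p_k to p_{k+1}. *)
Definition gammaP (n : nat) (p : nat -> linf) (t : R) : linf :=
  if Len n p == 0 then p 0%N
  else fun j => p 0%N j + \sum_(k < n) seg_param n p k t * (p k.+1 j - p k j).

Definition hfun (K : nat -> set linf) (n : nat) (x : linf) : R :=
  \sum_(1 <= k < n.+1) Num.min (n%:R * setdist x (K k)) 1.

Definition weighted_len (h : linf -> R) (n : nat) (p : nat -> linf) : R :=
  \sum_(k < n) h (p k) * ldist (p k) (p k.+1).

Definition paths_converge (n : nat -> nat) (p : nat -> nat -> linf)
    (gamma : R -> linf) : Prop :=
  (forall e : R, 0 < e -> exists N, forall i, (N <= i)%N ->
     forall t : R, 0 <= t <= 1 -> ldist (gammaP (n i) (p i) t) (gamma t) < e)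
  /\ (fun i => Mesh (n i) (p i)) @ \oo --> (0 : R).

Definition curve_in (X : set linf) (gamma : R -> linf) : Prop :=
  (forall t : R, 0 <= t <= 1 -> X (gamma t)) /\
  (forall t : R, 0 <= t <= 1 -> forall e : R, 0 < e -> exists2 d : R, 0 < d &
     forall s : R, 0 <= s <= 1 -> `|s - t| < d -> ldist (gamma s) (gamma t) < e).

End Linf.

(* Main.v *)
Require Import Defs.
From HB Require Import structures.
From mathcomp Require Import all_boot all_order all_algebra.
From mathcomp Require Import all_classical all_reals.
From mathcomp Require Import topology normedtype.
From mathcomp Require Import sequences.
From mathcomp Require Import ring lra.
Import numFieldNormedType.Exports.
Import Order.TTheory GRing.Theory Num.Theory.
Local Open Scope classical_set_scope.
Local Open Scope ring_scope.

Set Implicit Arguments. Unset Strict Implicit. Unset Printing Implicit Defensive.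

Lemma min_cases (R : realType) (a b : R) : (Num.min a b = a /\ a <= b) \/ (Num.min a b = b /\ b < a).
Proof. by case: (leP a b) => h; [left|right]. Qed.
Lemma max_cases (R : realType) (a b : R) : (Num.max a b = b /\ a <= b) \/ (Num.max a b = a /\ b < a).
Proof. by case: (leP a b) => h; [left|right]. Qed.
Ltac mm0 R := repeat (match goal with
 | |- context [@Order.min _ _ ?a ?b] => move: (@min_cases R a b) => [[-> ]|[-> ]]
 | |- context [@Order.max _ _ ?a ?b] => move: (@max_cases R a b) => [[-> ]|[-> ]]
 end); intros.
Ltac mm := match goal with RR : realType |- _ => mm0 RR end.

Section L.
Variable R : realType.
Implicit Types x y z : linf R.

Lemma ldist_ub x y : bounded_seq x -> bounded_seq y ->
  forall j, `|x j - y j| <= ldist x y.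
Proof.
move=> [Cx Hx] [Cy Hy] j.
have hub : has_ubound (range (fun j => `|x j - y j|)).
  exists (Cx + Cy) => _ [k _ <-].
  apply: le_trans (ler_normB _ _) _; exact: lerD.
exact: (ub_le_sup hub) (ex_intro2 _ _ j I erefl).
Qed.
Arguments ldist_ub {x y}.

Lemma ldist_le x y c : (forall j, `|x j - y j| <= c) -> ldist x y <= c.
Proof.
move=> H; apply: ge_sup; first by exists (`|x 0%N - y 0%N|), 0%N.
by move=> _ [k _ <-].
Qed.

Lemma ldist_ge0 x y : bounded_seq x -> bounded_seq y -> 0 <= ldist x y.
Proof. by move=> bx bY; exact: le_trans (normr_ge0 _) (ldist_ub bx bY 0%N). Qed.

Lemma ldistC x y : ldist x y = ldist y x.
Proof.
rewrite /ldist; congr sup.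
by rewrite (_ : (fun j => `|x j - y j|) = (fun j => `|y j - x j|)) //; apply/funext => j; rewrite distrC.
Qed.

Lemma ldist_tri x y z : bounded_seq x -> bounded_seq y -> bounded_seq z ->
  ldist x z <= ldist x y + ldist y z.
Proof.
move=> bx bY bz; apply: ldist_le => j.
apply: le_trans (ler_distD (y j) _ _) _.
by apply: lerD; apply: ldist_ub.
Qed.

Lemma ldist_xx x : bounded_seq x -> ldist x x = 0.
Proof.
move=> bx; apply/eqP; rewrite eq_le ldist_ge0 // andbT.
by apply: ldist_le => j; rewrite subrr normr0.
Qed.


Lemma minmax_scale (y d : R) : 0 < d ->
  Num.min 1 (Num.max 0 y) * d = Num.min d (Num.max 0 (y * d)).
Proof.
move=> d0; have [h|h] := leP y 0.
  have hz : y * d <= 0 by nra.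
  have hz' : y * d <= d by nra.
  have hz'' : y * d < 0 \/ y = 0 by rewrite le_eqVlt in h; case/orP: h => [/eqP ->|]; [right|left; nra].
  case: hz'' => [hz''|->]; rewrite ?mul0r; mm; lra.
have hz : 0 < y * d by nra.
have [h1|h1] := leP y 1.
  have h2 : y * d <= d by nra.
  mm; lra.
have h2 : d < y * d by nra.
mm; lra.
Qed.
End L.
Arguments ldist_ub {R x y}.

Definition dd (R : realType) (p : nat -> linf R) k := ldist (p k) (p k.+1).
Definition SS (R : realType) (p : nat -> linf R) k := \sum_(i < k) dd p i.
Definition cc (R : realType) (p : nat -> linf R) k (u : R) :=
  Num.min (dd p k) (Num.max 0 (u - SS p k)).

Section Path.
Variable R : realType.
Variables (n : nat) (p : nat -> linf R).
Hypothesis Hb : forall k, (k <= n)%N -> bounded_seq (p k).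

Lemma dd_ge0 k : (k < n)%N -> 0 <= dd p k.
Proof. by move=> kn; apply: ldist_ge0; apply: Hb => //; apply: ltnW. Qed.

Lemma SS_S k : SS p k.+1 = SS p k + dd p k.
Proof. by rewrite /SS big_ord_recr. Qed.

Lemma SS0 : SS p 0 = 0.
Proof. by rewrite /SS big_ord0. Qed.

Lemma Len_SS : Len n p = SS p n.
Proof. by []. Qed.

Lemma SS_mono k l : (k <= l)%N -> (l <= n)%N -> SS p k <= SS p l.
Proof.
move=> kl ln; elim: l kl ln => [|l IH]; first by rewrite leqn0 => /eqP ->.
rewrite leq_eqVlt => /orP [/eqP -> //|kl] ln.
rewrite SS_S; have := IH kl (ltnW ln); have := dd_ge0 ln; lra.
Qed.

Lemma SS_ge0 k : (k <= n)%N -> 0 <= SS p k.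
Proof. by move=> kn; rewrite -SS0; apply: SS_mono. Qed.

Lemma cc_sum m u : (m <= n)%N ->
  \sum_(k < m) cc p k u = Num.min (SS p m) (Num.max 0 u).
Proof.
elim: m => [|m IH] mn; first by rewrite big_ord0 SS0; mm; lra.
rewrite big_ord_recr /= IH ?(ltnW mn) // SS_S /cc.
have := SS_ge0 (ltnW mn); have := dd_ge0 mn.
move: (SS p m) (dd p m) => a b ha hb; mm; lra.
Qed.

Lemma cc_lip m u v : (m <= n)%N ->
  \sum_(k < m) `|cc p k u - cc p k v| <= `|u - v|.
Proof.
move=> mn.
wlog uv : u v / v <= u.
  move=> W; case: (leP v u) => h; first exact: W.
  rewrite distrC; under eq_bigr do rewrite distrC.
  by apply: W; apply: ltW.
have mono : forall k, (k < m)%N -> cc p k v <= cc p k u.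
  by move=> k _; rewrite /cc; mm; lra.
rewrite (eq_bigr (fun k : 'I_m => cc p k u - cc p k v)); last first.
  by move=> k _; rewrite ger0_norm // subr_ge0; apply: mono.
rewrite sumrB !cc_sum //.
have := SS_ge0 mn; move: (SS p m) => a ha; rewrite ger0_norm ?subr_ge0 //; mm; lra.
Qed.

Hypothesis HL : 0 < Len n p.

Lemma seg_eq k t : (k < n)%N ->
  seg_param n p k t * dd p k = cc p k (t * Len n p).
Proof.
move=> kn; rewrite /seg_param.
have -> : tk n p k = SS p k / Len n p by [].
have -> : tk n p k.+1 = SS p k.+1 / Len n p by [].
rewrite SS_S /cc.
have := dd_ge0 kn; rewrite le_eqVlt => /orP [/eqP d0|dpos].
  rewrite -d0 addr0 ltxx mul0r; mm; lra.
have -> : SS p k / Len n p < (SS p k + dd p k) / Len n p.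
  by rewrite ltr_pM2r ?invr_gt0 // ltrDl.
rewrite (_ : (t - SS p k / Len n p) / ((SS p k + dd p k) / Len n p - SS p k / Len n p)
   = ((t * Len n p - SS p k) / dd p k)); last first.
  by field; apply/andP; split; rewrite gt_eqF.
rewrite minmax_scale // mulrVK //; by rewrite unitfE gt_eqF.
Qed.

Lemma seg_01 k t : 0 <= seg_param n p k t <= 1.
Proof. rewrite /seg_param; case: ifP => _; mm; lra. Qed.


Lemma gammaP_j t j : gammaP n p t j =
  p 0%N j + \sum_(k < n) seg_param n p k t * (p k.+1 j - p k j).
Proof. by rewrite /gammaP gt_eqF. Qed.

Lemma Delta_le k j : (k < n)%N -> `|p k.+1 j - p k j| <= dd p k.
Proof.
move=> kn; rewrite distrC; apply: ldist_ub; apply: Hb => //; exact: ltnW.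
Qed.

Lemma term_b1 k t j : (k < n)%N ->
  `|seg_param n p k t * (p k.+1 j - p k j)| <= cc p k (t * Len n p).
Proof.
move=> kn; rewrite -seg_eq // normrM.
have /andP [s0 s1] := seg_01 k t; rewrite (ger0_norm s0).
by apply: ler_wpM2l => //; apply: Delta_le.
Qed.

Lemma term_b2 k t j : (k < n)%N ->
  `|seg_param n p k t * (p k.+1 j - p k j) - (p k.+1 j - p k j)| <=
     dd p k - cc p k (t * Len n p).
Proof.
move=> kn; rewrite -seg_eq //.
rewrite -{2}(mul1r (p k.+1 j - p k j)) -mulrBl normrM.
have /andP [s0 s1] := seg_01 k t.
have e : `|seg_param n p k t - 1| = 1 - seg_param n p k t.
  by rewrite distrC ger0_norm // subr_ge0.
rewrite e; have := Delta_le j kn; move: (`|_|) => A hA; nra.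
Qed.

Lemma term_lip k t s j : (k < n)%N ->
  `|seg_param n p k t * (p k.+1 j - p k j) - seg_param n p k s * (p k.+1 j - p k j)| <=
     `|cc p k (t * Len n p) - cc p k (s * Len n p)|.
Proof.
move=> kn; rewrite -!seg_eq // -!mulrBl !normrM.
rewrite (ger0_norm (dd_ge0 kn)).
by apply: ler_wpM2l => //; apply: Delta_le.
Qed.

Lemma gamma_lip t s j : `|gammaP n p t j - gammaP n p s j| <= Len n p * `|t - s|.
Proof.
rewrite !gammaP_j.
have -> : forall a b c : R, a + b - (a + c) = b - c by move=> a b c; ring.
rewrite -sumrB.
apply: le_trans (ler_norm_sum _ _ _) _.
apply: le_trans (_ : \sum_(k < n) `|cc p k (t * Len n p) - cc p k (s * Len n p)| <= _).
  by apply: ler_sum => k _; apply: term_lip.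
apply: (le_trans (cc_lip _ _ (leqnn n))).
by rewrite -mulrBl normrM mulrC (gtr0_norm HL).
Qed.

Lemma tele k j : p k j = p 0%N j + \sum_(l < k) (p l.+1 j - p l j).
Proof.
elim: k => [|k IH]; first by rewrite big_ord0 addr0.
by rewrite big_ord_recr /= addrA -IH addrC subrK.
Qed.

Lemma mesh_ge l : (l < n)%N -> dd p l <= Mesh n p.
Proof.
move=> ln; exact: (le_bigmax 0 (fun k : 'I_n => ldist (p k) (p k.+1)) (Ordinal ln)).
Qed.

Lemma exists_node u : 0 <= u <= SS p n ->
  exists k, (k <= n)%N /\ `|SS p k - u| <= Mesh n p.
Proof.
have : forall m, (m <= n)%N -> 0 <= u <= SS p m -> exists k, (k <= m)%N /\ `|SS p k - u| <= Mesh n p.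
  elim=> [|m IH] mn /andP [u0 um].
    exists 0%N; split => //; rewrite SS0 in um *.
    have -> : u = 0 by apply/eqP; rewrite eq_le um u0.
    rewrite subrr normr0; exact: bigmax_ge_id.
  case: (leP u (SS p m)) => h.
    have [k [km hk]] := IH (ltnW mn) (introT andP (conj u0 h)).
    by exists k; split => //; apply: leq_trans km _.
  exists m.+1; split => //.
  have := mesh_ge mn; rewrite SS_S in um *.
  rewrite ger0_norm; last by rewrite subr_ge0 -SS_S; rewrite SS_S.
  lra.
move=> H hu; have [k [kn hk]] := H n (leqnn n) hu; by exists k.
Qed.


Lemma near_node t : 0 <= t <= 1 ->
  exists k, (k <= n)%N /\ forall j, `|gammaP n p t j - p k j| <= Mesh n p.
Proof.
move=> /andP [t0 t1].
have hu : 0 <= t * Len n p <= SS p n.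
  by rewrite -Len_SS; apply/andP; split; [apply: mulr_ge0 => //; apply: ltW | apply: ler_piMl => //; apply: ltW].
have [k [kn hk]] := exists_node hu.
exists k; split => // j.
move: hu hk; set u := t * Len n p => hu hk.
rewrite gammaP_j (tele k j).
have -> : forall a b c : R, a + b - (a + c) = b - c by move=> a b c; ring.
have E1 : \sum_(l < n) seg_param n p l t * (p l.+1 j - p l j) =
   \sum_(0 <= l < n) seg_param n p l t * (p l.+1 j - p l j) by rewrite big_mkord.
have E2 : \sum_(l < k) (p l.+1 j - p l j) = \sum_(0 <= l < k) (p l.+1 j - p l j)
  by rewrite big_mkord.
rewrite E1 E2 (big_cat_nat (leq0n k) kn) /=.
rewrite addrAC -sumrB.
apply: le_trans (ler_normD _ _) _.
have h1 : `|\sum_(0 <= l < k) (seg_param n p l t * (p l.+1 j - p l j) - (p l.+1 j - p l j))|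
   <= \sum_(0 <= l < k) (dd p l - cc p l u).
  apply: le_trans (ler_norm_sum _ _ _) _; apply: ler_sum_nat => l /andP [_ lk].
  by apply: term_b2; apply: leq_trans lk kn.
have h2 : `|\sum_(k <= l < n) seg_param n p l t * (p l.+1 j - p l j)|
   <= \sum_(k <= l < n) cc p l u.
  apply: le_trans (ler_norm_sum _ _ _) _; apply: ler_sum_nat => l /andP [_ lk].
  by apply: term_b1.
apply: le_trans (lerD h1 h2) _.
have e1 : \sum_(0 <= l < n) cc p l u = \sum_(0 <= l < k) cc p l u + \sum_(k <= l < n) cc p l u.
  by rewrite (big_cat_nat (leq0n k) kn).
have e2 : \sum_(0 <= l < k) (dd p l - cc p l u) = SS p k - \sum_(0 <= l < k) cc p l u.
  by rewrite sumrB big_mkord.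
rewrite e2.
have e3 : \sum_(k <= l < n) cc p l u = \sum_(0 <= l < n) cc p l u - \sum_(0 <= l < k) cc p l u.
  by rewrite e1; ring.
rewrite e3 !big_mkord !cc_sum //.
have := SS_ge0 kn; have := SS_mono kn (leqnn n).
move: hk; rewrite ler_norml => /andP [hk1 hk2].
move: hu => /andP [hu1 hu2].
move: (SS p k) (SS p n) (Mesh n p) hk1 hk2 hu2 => a b M ? ? ? ? ?; mm; lra.
Qed.

Lemma gammaP_bounded t : 0 <= t <= 1 -> bounded_seq (gammaP n p t).
Proof.
move=> ht; have [k [kn hk]] := near_node ht.
have [C hC] := Hb kn; exists (C + Mesh n p) => j.
have := hk j; have := hC j.
have := ler_normB (gammaP n p t j - p k j) (- p k j).
rewrite opprK subrK normrN; lra.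
Qed.

Lemma gammaP_node t : 0 <= t <= 1 ->
  exists k, (k <= n)%N /\ ldist (gammaP n p t) (p k) <= Mesh n p.
Proof.
move=> ht; have [k [kn hk]] := near_node ht.
by exists k; split => //; apply: ldist_le.
Qed.

Lemma gammaP_lipd t s : ldist (gammaP n p t) (gammaP n p s) <= Len n p * `|t - s|.
Proof. by apply: ldist_le => j; apply: gamma_lip. Qed.

End Path.

Section Path2.
Variable R : realType.
Variables (n : nat) (p : nat -> linf R).
Hypothesis Hb : forall k, (k <= n)%N -> bounded_seq (p k).

Lemma chain j k : (j <= k)%N -> (k <= n)%N -> ldist (p j) (p k) <= SS p k - SS p j.
Proof.
elim: k => [|k IH] jk kn.
  by move: jk; rewrite leqn0 => /eqP ->; rewrite ldist_xx ?subrr //; apply: Hb.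
move: jk; rewrite leq_eqVlt => /orP [/eqP ->|jk].
  by rewrite ldist_xx ?subrr //; apply: Hb.
have bj : bounded_seq (p j) by apply: Hb; apply: leq_trans (ltnW kn); exact: jk.
apply: le_trans (ldist_tri bj (Hb (ltnW kn)) (Hb kn)) _.
have := IH jk (ltnW kn); rewrite SS_S; rewrite /dd; lra.
Qed.

Lemma diam_le_Len : diam n p <= Len n p.
Proof.
have L0 : 0 <= Len n p by rewrite Len_SS; exact: (SS_ge0 Hb (leqnn n)).
apply: bigmax_le => // k _; apply: bigmax_le => // l _.
have kn : (k <= n)%N by rewrite -ltnS.
have ln : (l <= n)%N by rewrite -ltnS.
have hk := SS_ge0 Hb kn; have hl := SS_ge0 Hb ln.
have hkn := SS_mono Hb kn (leqnn n); have hln := SS_mono Hb ln (leqnn n).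
rewrite Len_SS; case: (leqP k l) => h.
  have := chain h ln; lra.
rewrite ldistC; have := chain (ltnW h) kn; lra.
Qed.

End Path2.

Section SetDist.
Variable R : realType.
Implicit Types (x : linf R) (A B : set (linf R)).

Definition bnd_set A := forall a, A a -> bounded_seq a.

Lemma setdist_ge0 x A : bounded_seq x -> A !=set0 -> bnd_set A -> 0 <= setdist x A.
Proof.
move=> bx [a Aa] bA; apply: lb_le_inf; first by exists (ldist x a), a.
by move=> _ [b Ab <-]; apply: ldist_ge0 => //; apply: bA.
Qed.

Lemma setdist_le x A a : bounded_seq x -> bnd_set A -> A a -> setdist x A <= ldist x a.
Proof.
move=> bx bA Aa; apply: ge_inf; last by exists a.
by exists 0 => _ [b Ab <-]; apply: ldist_ge0 => //; apply: bA.
Qed.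

Lemma setdist_mono x A B : bounded_seq x -> A `<=` B -> A !=set0 -> bnd_set B ->
  setdist x B <= setdist x A.
Proof.
move=> bx AB [a Aa] bB; apply: lb_le_inf; first by exists (ldist x a), a.
by move=> _ [b Ab <-]; apply: setdist_le => //; apply: AB.
Qed.

Lemma setdist_lt x A c : A !=set0 -> setdist x A < c -> exists2 a, A a & ldist x a < c.
Proof.
move=> [a Aa] h; have [_ [b Ab <-] hb] := inf_lt (ex_intro _ (ldist x a) (ex_intro2 _ _ a Aa erefl)) h.
by exists b.
Qed.

End SetDist.

Section Disc.
Variable R : realType.
Variables (K : nat -> set (linf R)) (i m n : nat) (p : nat -> linf R) (M Delta : R).
Hypothesis HK0 : forall k, (1 <= k)%N -> K k !=set0.
Hypothesis HKb : forall k, (1 <= k)%N -> bnd_set (K k).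
Hypothesis Hmono : forall m1 m2, (1 <= m1)%N -> (m1 <= m2)%N -> K m1 `<=` K m2.
Hypothesis Hb : forall k, (k <= n)%N -> bounded_seq (p k).
Hypothesis Hm : (1 <= m)%N.
Hypothesis Hmi : (m <= i)%N.
Hypothesis Hw : weighted_len (hfun K i) n p <= M.

Definition nearb l := setdist (p l) (K m) < i%:R^-1.

Lemma term_ge0 x k : bounded_seq x -> (1 <= k)%N ->
  0 <= Num.min (i%:R * setdist x (K k)) 1.
Proof.
move=> bx k1; have := setdist_ge0 bx (HK0 k1) (HKb k1).
move=> h; have h2 : 0 <= i%:R * setdist x (K k) by apply: mulr_ge0.
move: h2; move: (i%:R * _) => a ha; mm; lra.
Qed.

Lemma hfun_ge0 x : bounded_seq x -> 0 <= hfun K i x.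
Proof.
move=> bx; rewrite /hfun big_nat_cond; apply: sumr_ge0 => k /andP [/andP [k1 _] _].
exact: term_ge0.
Qed.

Lemma hfun_far x : bounded_seq x -> ~ (setdist x (K m) < i%:R^-1) -> m%:R <= hfun K i x.
Proof.
move=> bx /negP; rewrite -leNgt => hfar.
have i0 : (0 < i)%N by apply: leq_trans Hmi.
rewrite /hfun (big_cat_nat (_ : (1 <= m.+1)%N) (_ : (m.+1 <= i.+1)%N)) //.
have h2 : 0 <= \sum_(m.+1 <= k < i.+1) Num.min (i%:R * setdist x (K k)) 1.
  rewrite big_nat_cond; apply: sumr_ge0 => k /andP [/andP [k1 _] _].
  by apply: term_ge0 => //; apply: leq_trans k1.
have h1 : \sum_(1 <= k < m.+1) Num.min (i%:R * setdist x (K k)) 1 = m%:R.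
  rewrite big_nat_cond (eq_bigr (fun _ => 1)); last first.
    move=> k /andP [/andP [k1 km] _].
    have hs : setdist x (K m) <= setdist x (K k).
      apply: setdist_mono => //; [exact: Hmono | exact: HK0 | exact: HKb].
    have ip : 0 < i%:R :> R by rewrite ltr0n.
    have : 1 <= i%:R * setdist x (K k).
      have := ler_wpM2l (ltW ip) (le_trans hfar hs).
      by rewrite mulfV // lt0r_neq0.
    move: (i%:R * _) => a ha; mm; lra.
  by rewrite -big_nat_cond sumr_const_nat subn1 /=.
by rewrite h1 lerDl.
Qed.

Definition fw l := if `[< setdist (p l) (K m) < i%:R^-1 >] then 0 else dd p l.

Lemma fw_ge0 l : (l < n)%N -> 0 <= fw l.
Proof. by move=> ln; rewrite /fw; case: ifP => _ //; exact: (dd_ge0 Hb ln). Qed.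

Lemma W_bound : m%:R * \sum_(l < n) fw l <= M.
Proof.
apply: le_trans Hw; rewrite /weighted_len mulr_sumr; apply: ler_sum => l _.
have bl : bounded_seq (p l) by apply: Hb; apply: ltnW.
rewrite /fw; case: ifP => h.
  by rewrite mulr0; apply: mulr_ge0; [apply: hfun_ge0|apply: (dd_ge0 Hb)].
apply: ler_wpM2r; first exact: (dd_ge0 Hb).
by apply: hfun_far => //; move=> h'; move: h; rewrite asboolT.
Qed.


Definition nearP l := setdist (p l) (K m) < i%:R^-1.
Definition W k := \sum_(l < k) fw l.

Lemma W_S k : W k.+1 = W k + fw k.
Proof. by rewrite /W big_ord_recr. Qed.

Lemma W_ge0 k : (k <= n)%N -> 0 <= W k.
Proof.
by move=> kn; apply: sumr_ge0 => l _; apply: fw_ge0; apply: leq_trans (ltn_ord l) kn.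
Qed.

Lemma W_far k : (forall l, (l < k)%N -> ~ nearP l) -> W k = SS p k.
Proof. by move=> H; apply: eq_bigr => l _; rewrite /fw asboolF //; apply: H. Qed.

Lemma mesh_ge0 : 0 <= Mesh n p.
Proof. exact: bigmax_ge_id. Qed.

Lemma runs k : (k <= n)%N -> (forall l, (l <= k)%N -> ~ nearP l) \/
   (forall j, (j <= k)%N -> exists l, [/\ (l <= k)%N, nearP l &
        ldist (p j) (p l) <= Mesh n p + W k]).
Proof.
have M0 := mesh_ge0.
elim: k => [|k IH] kn.
  case: (pselect (nearP 0)) => h0.
    right => j; rewrite leqn0 => /eqP ->; exists 0%N; split => //.
    have W0 : W 0 = 0 by apply: big_ord0.
    rewrite ldist_xx; [lra | exact: Hb].
  by left => l; rewrite leqn0 => /eqP ->.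
have kn' := ltnW kn.
have hWS := W_S k; have fk0 := fw_ge0 kn; have Wk0 := W_ge0 kn'.
have bk := Hb kn'; have bk1 := Hb kn.
case: (IH kn') => [Hall|Hex].
  case: (pselect (nearP k.+1)) => hn.
    right => j jk; exists k.+1; split => //.
    have hW : W k.+1 = SS p k.+1 by apply: W_far => l; rewrite ltnS; apply: Hall.
    have := chain Hb jk kn; have := SS_ge0 Hb (leq_trans jk kn); lra.
  by left => l; rewrite leq_eqVlt => /orP [/eqP -> //| lk]; apply: Hall; rewrite -ltnS.
right => j; rewrite leq_eqVlt => /orP [/eqP ->|jk]; last first.
  have [l [lk hl hd]] := Hex j (jk : (j <= k)%N).
  exists l; split => //; first exact: leqW.
  lra.
case: (pselect (nearP k.+1)) => hn.
  by exists k.+1; split => //; rewrite ldist_xx //; lra.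
case: (pselect (nearP k)) => hk.
  exists k; split => //; rewrite ldistC.
  have := @mesh_ge R n p k kn; rewrite /dd; lra.
have [l [lk hl hd]] := Hex k (leqnn k).
exists l; split => //; first exact: leqW.
have bl : bounded_seq (p l) by apply: Hb; apply: leq_trans lk kn'.
apply: le_trans (ldist_tri bk1 bk bl) _.
have hf : fw k = dd p k by rewrite /fw asboolF.
rewrite ldistC; rewrite /dd in hf; lra.
Qed.

Hypothesis HD : Delta <= diam n p.
Hypothesis Hmd : M < m%:R * Delta.

Lemma near_K j : (j <= n)%N ->
  exists2 a, K m a & ldist (p j) a <= i%:R^-1 + Mesh n p + M / m%:R.
Proof.
move=> jn.
have m0 : 0 < m%:R :> R by rewrite ltr0n.
have WB := W_bound.
have hW : W n <= M / m%:R.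
  by rewrite ler_pdivlMr // mulrC; exact: WB.
case: (runs (leqnn n)) => [Hall|Hex].
  exfalso.
  have hW' : W n = SS p n by apply: W_far => l ln; apply: Hall; apply: ltnW.
  have := diam_le_Len Hb; rewrite Len_SS -hW' => hd.
  have := ler_wpM2l (ltW m0) (le_trans HD hd).
  move: WB; rewrite -/(W n) => h1 h2.
  by have := lt_le_trans Hmd (le_trans h2 h1); rewrite ltxx.
have [l [ln hl hd]] := Hex j jn.
have [a Ka ha] := setdist_lt (HK0 Hm) hl.
exists a => //.
have ba : bounded_seq a by apply: (HKb Hm).
apply: le_trans (ldist_tri (Hb jn) (Hb ln) ba) _.
lra.
Qed.

End Disc.

Set Implicit Arguments. Unset Strict Implicit. Unset Printing Implicit Defensive.

Definition incr (f : nat -> nat) := forall i, (f i < f i.+1)%N.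

Lemma incr_lt f : incr f -> forall i j, (i < j)%N -> (f i < f j)%N.
Proof.
move=> hf i; elim=> [//|j IH]; rewrite ltnS leq_eqVlt => /orP [/eqP ->|h] //.
exact: ltn_trans (IH h) (hf j).
Qed.

Lemma incr_le f : incr f -> forall i j, (i <= j)%N -> (f i <= f j)%N.
Proof.
move=> hf i j; rewrite leq_eqVlt => /orP [/eqP ->|h] //.
exact: ltnW (incr_lt hf h).
Qed.

Lemma incr_ge f : incr f -> forall i, (i <= f i)%N.
Proof. by move=> hf; elim=> [//|i IH]; apply: leq_ltn_trans IH (hf i). Qed.

Lemma incr_comp f g : incr f -> incr g -> incr (f \o g).
Proof. by move=> hf hg i; exact: (incr_lt hf (hg i)). Qed.

Definition Ccauchy (P : nat -> nat -> Prop) (phi : nat -> nat) :=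
  exists N, forall k l, (N <= k)%N -> (N <= l)%N -> P (phi k) (phi l).

Fixpoint Phi (ch : nat -> (nat -> nat) -> (nat -> nat)) k : nat -> nat :=
  match k with 0 => ch 0%N id | k'.+1 => Phi ch k' \o ch k'.+1 (Phi ch k') end.

Lemma diag (E : Type) (P : nat -> E -> nat -> nat -> Prop) :
  (forall r psi, incr psi -> exists phi, incr phi /\ forall e, Ccauchy (P r e) (psi \o phi)) ->
  exists D, incr D /\ forall r e, Ccauchy (P r e) D.
Proof.
move=> H.
have H' : forall rp : nat * (nat -> nat), exists phi, incr rp.2 ->
    incr phi /\ forall e, Ccauchy (P rp.1 e) (rp.2 \o phi).
  move=> [r psi]; case: (pselect (incr psi)) => h.
    by have [phi hphi] := H r psi h; exists phi.
  by exists id.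
have [chp Hch] := choice H'.
pose ch r psi := chp (r, psi).
have Hc : forall r psi, incr psi -> incr (ch r psi) /\ forall e, Ccauchy (P r e) (psi \o ch r psi).
  by move=> r psi h; apply: (Hch (r, psi)).
have incrid : incr id by [].
have incrPhi : forall k, incr (Phi ch k).
  elim=> [|k IH] /=; first exact: (Hc 0%N id incrid).1.
  exact: incr_comp IH (Hc _ _ IH).1.
have cPhi : forall k e, Ccauchy (P k e) (Phi ch k).
  case=> [|k] e /=; first exact: (Hc 0%N id incrid).2.
  exact: (Hc _ _ (incrPhi k)).2.
have fac : forall r d, exists s, (forall x, (x <= s x)%N) /\ forall x, Phi ch (d + r) x = Phi ch r (s x).
  move=> r; elim=> [|d [s [hs1 hs2]]]; first by exists id.
  exists (s \o ch (d + r).+1 (Phi ch (d + r))); split.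
    move=> x /=; apply: leq_trans (hs1 _).
    exact: incr_ge (Hc _ _ (incrPhi _)).1 x.
  by move=> x /=; rewrite -hs2.
exists (fun x => Phi ch x x); split.
  move=> x /=.
  exact: (incr_lt (incrPhi x) (incr_ge (Hc _ _ (incrPhi x)).1 x.+1)).
move=> r e; have [N HN] := cPhi r e.
exists (maxn N r) => k l hk hl.
have [sk [hsk1 hsk2]] := fac r (k - r)%N.
have [sl [hsl1 hsl2]] := fac r (l - r)%N.
have ek : (k - r + r)%N = k by rewrite subnK //; apply: leq_trans (leq_maxr N r) hk.
have el : (l - r + r)%N = l by rewrite subnK //; apply: leq_trans (leq_maxr N r) hl.
have := hsk2 k; have := hsl2 l; rewrite ek el => -> ->.
apply: HN.
  exact: leq_trans (leq_trans (leq_maxl N r) hk) (hsk1 k).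
exact: leq_trans (leq_trans (leq_maxl N r) hl) (hsl1 l).
Qed.

Section Archi.
Variable R : realType.

Lemma archi (c e : R) : 0 < e -> exists N : nat, c < N%:R * e.
Proof.
move=> e0; case: (leP c 0) => c0.
  by exists 1%N; rewrite mul1r; apply: le_lt_trans c0 e0.
have ce : 0 <= c / e by apply: divr_ge0; apply: ltW.
have /andP [_ h] := truncn_itv ce.
exists (Num.trunc (c / e)).+1.
by rewrite -ltr_pdivrMr.
Qed.

Lemma small_div (c e : R) : 0 < e -> exists N : nat, forall k, (N <= k)%N -> c / k.+1%:R < e.
Proof.
move=> e0; have [N hN] := archi c e0; exists N => k hk.
rewrite ltr_pdivrMr ?ltr0n // mulrC; apply: lt_le_trans hN _.
apply: ler_wpM2r; first exact: ltW.
by rewrite ler_nat; apply: leq_trans hk _.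
Qed.

Lemma small_inv (e : R) : 0 < e -> exists N : nat, (1 <= N)%N /\ forall k, (N <= k)%N -> k%:R^-1 < e.
Proof.
move=> e0; have [N hN] := small_div 1 e0; exists N.+1; split => // k hk.
case: k hk => [//|k'] hk.
by have := hN k' hk; rewrite div1r.
Qed.

End Archi.

Lemma cauchy_sub (R : realType) (K : nat -> set (linf R)) (w : nat -> linf R) :
  (forall i, bounded_seq (w i)) ->
  (forall k, (1 <= k)%N -> compact_sub (K k) /\ bnd_set (K k)) ->
  (forall e, 0 < e -> exists k N, (1 <= k)%N /\
      forall i, (N <= i)%N -> exists2 a, K k a & ldist (w i) a < e) ->
  exists phi, incr phi /\ forall e, 0 < e -> exists N, forall k l, (N <= k)%N -> (N <= l)%N ->
      ldist (w (phi k)) (w (phi l)) < e.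
Proof.
move=> bw HK Hyp.
have := @diag unit (fun r _ a b => ldist (w a) (w b) < 4 * r.+1%:R^-1).
case.
  move=> r psi hpsi.
  have eps0 : 0 < r.+1%:R^-1 :> R by rewrite invr_gt0 ltr0n.
  have [k [N [k1 HN]]] := Hyp _ eps0.
  have ha : forall i, exists a, K k a /\ ldist (w (psi (i + N)%N)) a < r.+1%:R^-1.
    move=> i; have hi : (N <= psi (i + N)%N)%N.
      apply: leq_trans (leq_addl i N) _; exact: incr_ge.
    by have [a Ka h] := HN _ hi; exists a.
  have [a Ha] := choice ha.
  have [hc hb] := HK k k1.
  have [chi [hchi [x Kx Hx]]] := hc a (fun i => (Ha i).1).
  have [N' HN'] := Hx _ eps0.
  exists (fun i => chi i + N)%N; split.
    by move=> i; rewrite ltn_add2r.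
  move=> _; exists N' => k' l' hk hl /=.
  have b1 := bw (psi (chi k' + N)%N); have b2 := bw (psi (chi l' + N)%N).
  have ba1 := hb _ (Ha (chi k')).1; have ba2 := hb _ (Ha (chi l')).1.
  have bx := hb _ Kx.
  have t1 := ldist_tri b1 ba1 b2.
  have t2 := ldist_tri ba1 bx b2.
  have t3 := ldist_tri bx ba2 b2.
  have h1 := (Ha (chi k')).2; have h2 := (Ha (chi l')).2.
  have h3 := HN' k' hk; have h4 := HN' l' hl.
  have e1 := ldistC (a (chi l')) (w (psi (chi l' + N)%N)).
  have e2 := ldistC x (a (chi l')).
  move: t1 t2 t3 h1 h2 h3 h4 e1 e2; move: (r.+1%:R^-1) => E.
  lra.
move=> D [hD HD]; exists D; split => // e e0.
have [r hr] := small_div 4 e0.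
have [N HN] := HD r tt.
exists N => k l hk hl; apply: lt_trans (HN k l hk hl) _.
exact: (hr r (leqnn r)).
Qed.

Lemma cvg_eN (R : realType) (u : nat -> R) : u @ \oo --> 0 <-> forall e : R, 0 < e -> exists N, forall i, (N <= i)%N -> `|u i| < e.
Proof.
split.
- move/cvgrPdist_lt => H e e0. have [N _ HN] := H e e0. exists N => i Hi.
  by have := HN i Hi; rewrite sub0r normrN.
- move=> H; apply/cvgrPdist_lt => e e0. have [N HN] := H e e0. exists N => // i Hi.
  by rewrite /= sub0r normrN; apply: HN.
Qed.

Definition tq (R : realType) (q : nat) : R :=
  match @unpickle (prod nat nat) q with
  | Some (j, N) => if (j <= N)%N then j%:R / N%:R else 0
  | None => 0 end.

Lemma tq_pickle (R : realType) j N : (j <= N)%N -> tq R (pickle (j, N)) = j%:R / N%:R.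
Proof. by move=> jN; rewrite /tq pickleK jN. Qed.

Lemma tq_01 (R : realType) q : 0 <= tq R q <= 1.
Proof.
rewrite /tq; case: (unpickle q) => [[j N]|]; last by rewrite lexx ler01.
case: ifP => jN; last by rewrite lexx ler01.
case: N jN => [|N] jN.
  by rewrite invr0 mulr0 lexx ler01.
apply/andP; split; first by apply: divr_ge0.
by rewrite ler_pdivrMr ?ltr0n // mul1r ler_nat.
Qed.

Unset Implicit Arguments.
Set Strict Implicit.

Theorem lemma2p7 (R : realType) (X : set (linf R))
  (K : nat -> set (linf R)) (M L Delta : R)
  (n : nat -> nat) (p : nat -> nat -> linf R) :
  (forall x, X x -> bounded_seq x) ->
  complete_sub X -> separable_sub X ->
  (forall m, (1 <= m)%N -> K m !=set0 /\ compact_sub (K m) /\ K m `<=` X) ->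
  (forall m1 m2, (1 <= m1)%N -> (m1 <= m2)%N -> K m1 `<=` K m2) ->
  0 < M -> 0 < L -> 0 < Delta ->
  (forall i, (1 <= i)%N -> (1 <= n i)%N /\ forall k, (k <= n i)%N -> X (p i k)) ->
  (fun i => Mesh (n i) (p i)) @ \oo --> (0 : R) ->
  (forall i, (1 <= i)%N -> Len (n i) (p i) <= L) ->
  (forall i, (1 <= i)%N -> Delta <= diam (n i) (p i)) ->
  (forall i, (1 <= i)%N -> weighted_len (hfun K i) (n i) (p i) <= M) ->
  exists phi : nat -> nat, (forall i, (phi i < phi i.+1)%N) /\
    exists gamma : R -> linf R, curve_in X gamma /\
      paths_converge (fun i => n (phi i)) (fun i => p (phi i)) gamma.
Proof.
move=> HXb Hcomp Hsep HK Hmono M0 L0 D0 Hn Hmesh HLen Hdiam Hw.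
pose G i t := gammaP (n i) (p i) t.
have Hb : forall i, (1 <= i)%N -> forall k, (k <= n i)%N -> bounded_seq (p i k).
  by move=> i hi k hk; apply: HXb; apply: (Hn i hi).2.
have HKb : forall k, (1 <= k)%N -> bnd_set (K k).
  by move=> k hk x Kx; apply: HXb; apply: (HK k hk).2.2.
have HK0 : forall k, (1 <= k)%N -> K k !=set0 by move=> k hk; exact: (HK k hk).1.
have HLpos : forall i, (1 <= i)%N -> 0 < Len (n i) (p i).
  move=> i hi; exact: lt_le_trans D0 (le_trans (Hdiam i hi) (diam_le_Len (Hb i hi))).
have Gb : forall i t, (1 <= i)%N -> 0 <= t <= 1 -> bounded_seq (G i t).
  by move=> i t hi ht; exact: (@gammaP_bounded R (n i) (p i) (Hb i hi) (HLpos i hi) t ht).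
have Gnode : forall i t, (1 <= i)%N -> 0 <= t <= 1 ->
    exists k, (k <= n i)%N /\ ldist (G i t) (p i k) <= Mesh (n i) (p i).
  by move=> i t hi ht; exact: (@gammaP_node R (n i) (p i) (Hb i hi) (HLpos i hi) t ht).
have Glip : forall i t s, (1 <= i)%N -> ldist (G i t) (G i s) <= L * `|t - s|.
  move=> i t s hi; apply: le_trans (@gammaP_lipd R (n i) (p i) (Hb i hi) (HLpos i hi) t s) _.
  by apply: ler_wpM2r; [exact: normr_ge0 | exact: HLen].
have HM := (cvg_eN _).1 Hmesh.
have Mesh_small : forall e, 0 < e -> exists N, forall i, (N <= i)%N -> Mesh (n i) (p i) < e.
  move=> e e0; have [N HN] := HM e e0; exists N => i hi.
  exact: le_lt_trans (ler_norm _) (HN i hi).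
have [m0 hm0] := archi M D0.
have GK : forall i t m, (1 <= m)%N -> (m0 <= m)%N -> (m <= i)%N -> 0 <= t <= 1 ->
    exists2 a, K m a & ldist (G i t) a <= i%:R^-1 + 2 * Mesh (n i) (p i) + M / m%:R.
  move=> i t m hm hm0m hmi ht.
  have hi : (1 <= i)%N by apply: leq_trans hmi.
  have [k [kn hk]] := Gnode i t hi ht.
  have Hmd : M < m%:R * Delta.
    apply: lt_le_trans hm0 _; apply: ler_wpM2r; first exact: ltW.
    by rewrite ler_nat.
  have [a Ka ha] := near_K HK0 HKb Hmono (Hb i hi) hm hmi (Hw i hi) (Hdiam i hi) Hmd kn.
  exists a => //.
  apply: le_trans (ldist_tri (Gb i t hi ht) (Hb i hi k kn) (HKb m hm a Ka)) _.
  lra.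
have Hpt : forall t, 0 <= t <= 1 -> forall psi, incr psi -> exists phi, incr phi /\
    forall e, 0 < e -> exists N, forall k l, (N <= k)%N -> (N <= l)%N ->
      ldist (G (psi (phi k)) t) (G (psi (phi l)) t) < e.
  move=> t ht psi hpsi.
  pose w i := G (psi i.+1) t.
  have hpsi1 : forall i, (1 <= psi i.+1)%N.
    by move=> i; apply: leq_trans (incr_ge hpsi i.+1).
  have bw : forall i, bounded_seq (w i) by move=> i; apply: Gb => //; apply: hpsi1.
  have hyp : forall e, 0 < e -> exists k N, (1 <= k)%N /\
      forall i, (N <= i)%N -> exists2 a, K k a & ldist (w i) a < e.
    move=> e e0.
    have e3 : 0 < e / 3 by apply: divr_gt0.
    have e6 : 0 < e / 6 by apply: divr_gt0.
    have [m1 hm1] := archi M e3.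
    pose m := maxn 1 (maxn m0 m1).
    have [Nm hNm] := Mesh_small _ e6.
    have [Ni [Ni1 hNi]] := small_inv e3.
    exists m, (maxn (maxn Nm Ni) m); split; first exact: leq_maxl.
    move=> i hi.
    have hj : (maxn (maxn Nm Ni) m <= psi i.+1)%N.
      apply: leq_trans hi (leq_trans (leqnSn i) (incr_ge hpsi i.+1)).
    have hj3 := leq_trans (leq_maxr _ m) hj.
    have hj1 := leq_trans (leq_trans (leq_maxl Nm Ni) (leq_maxl _ m)) hj.
    have hj2 := leq_trans (leq_trans (leq_maxr Nm Ni) (leq_maxl _ m)) hj.
    have hm1m : (1 <= m)%N by exact: leq_maxl.
    have hm0m : (m0 <= m)%N by rewrite /m !leq_max leqnn orbT.
    have hm1m' : (m1 <= m)%N by rewrite /m !leq_max leqnn !orbT.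
    have [a Ka ha] := GK (psi i.+1) t m hm1m hm0m hj3 ht.
    exists a => //; apply: le_lt_trans ha _.
    have f1 := hNi _ hj2.
    have f2 := hNm _ hj1.
    have f3 : M / m%:R < e / 3.
      rewrite ltr_pdivrMr ?ltr0n //; apply: lt_le_trans hm1 _.
      rewrite mulrC; apply: ler_wpM2l; first exact: ltW.
      by rewrite ler_nat.
    lra.
  have [phi [hphi Hc]] := cauchy_sub bw (fun k hk => conj (HK k hk).2.1 (HKb k hk)) hyp.
  exists (fun i => (phi i).+1); split; first by move=> i; rewrite ltnS; exact: hphi.
  exact: Hc.
have [D [hD HD]] : exists D, incr D /\ forall q (e : R), Ccauchy
    (fun a b => 0 < e -> ldist (G a (tq R q)) (G b (tq R q)) < e) D.
  apply: (@diag R (fun q e a b => 0 < e -> ldist (G a (tq R q)) (G b (tq R q)) < e)).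
  move=> q psi hpsi.
  have [phi [hphi Hc]] := Hpt (tq R q) (tq_01 R q) psi hpsi.
  exists phi; split => // e.
  case: (ltP 0 e) => e0.
    by have [N HN] := Hc e e0; exists N => k l hk hl _; exact: HN.
  by exists 0%N => k l _ _.
have HDc : forall q e, 0 < e -> exists N, forall k l, (N <= k)%N -> (N <= l)%N ->
    ldist (G (D k) (tq R q)) (G (D l) (tq R q)) < e.
  by move=> q e e0; have [N HN] := HD q e; exists N => k l hk hl; exact: HN.
have hD1 : forall k, (1 <= k)%N -> (1 <= D k)%N.
  by move=> k hk; apply: leq_trans hk (incr_ge hD k).
have UC : forall e, 0 < e -> exists N, (1 <= N)%N /\ forall k l, (N <= k)%N -> (N <= l)%N ->
    forall t, 0 <= t <= 1 -> ldist (G (D k) t) (G (D l) t) < e.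
  move=> e e0.
  have e4 : 0 < e / 4 by apply: divr_gt0.
  have e2 : 0 < e / 2 by apply: divr_gt0.
  have [Ng0 hNg0] := archi L e4.
  pose Ng := Ng0.+1.
  have hNg : L < Ng%:R * (e / 4).
    apply: lt_le_trans hNg0 _; apply: ler_wpM2r; first exact: ltW.
    by rewrite ler_nat.
  have Ngp : 0 < Ng%:R :> R by rewrite ltr0n.
  have grid : forall J, (J <= Ng)%N -> exists N, forall j, (j <= J)%N -> forall k l,
      (N <= k)%N -> (N <= l)%N ->
      ldist (G (D k) (j%:R / Ng%:R)) (G (D l) (j%:R / Ng%:R)) < e / 2.
    elim=> [|J IH] hJ.
      have [N HN] := HDc (pickle (0%N, Ng)) _ e2.
      exists N => j; rewrite leqn0 => /eqP -> k l hk hl.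
      by rewrite -tq_pickle //; apply: HN.
    have [N1 HN1] := IH (ltnW hJ).
    have [N2 HN2] := HDc (pickle (J.+1, Ng)) _ e2.
    exists (maxn N1 N2) => j; rewrite leq_eqVlt => /orP [/eqP -> | hj] k l hk hl.
      rewrite -tq_pickle //; apply: HN2.
        exact: leq_trans (leq_maxr _ _) hk.
      exact: leq_trans (leq_maxr _ _) hl.
    apply: HN1; first by rewrite -ltnS.
      exact: leq_trans (leq_maxl _ _) hk.
    exact: leq_trans (leq_maxl _ _) hl.
  have [Ngr HNgr] := grid Ng (leqnn Ng).
  exists (maxn Ngr 1); split; first exact: leq_maxr.
  move=> k l hk hl t ht.
  have hk1 : (1 <= D k)%N by apply: hD1; apply: leq_trans (leq_maxr _ _) hk.
  have hl1 : (1 <= D l)%N by apply: hD1; apply: leq_trans (leq_maxr _ _) hl.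
  have /andP [t0 t1] := ht.
  have tN0 : 0 <= t * Ng%:R by apply: mulr_ge0 => //; exact: ltW.
  have /andP [hj1 hj2] := truncn_itv tN0.
  move: hj1 hj2; set j := Num.trunc (t * Ng%:R) => hj1 hj2.
  have jN : (j <= Ng)%N.
    rewrite -(ler_nat R); apply: le_trans hj1 _.
    by apply: ler_piMl => //; exact: ltW.
  have htj : 0 <= (j%:R / Ng%:R : R) <= 1.
    apply/andP; split; first by apply: divr_ge0.
    by rewrite ler_pdivrMr // mul1r ler_nat.
  have hdiff : `|t - j%:R / Ng%:R| <= Ng%:R^-1.
    have e1 : t - j%:R / Ng%:R = (t * Ng%:R - j%:R) / Ng%:R.
      by field; rewrite gt_eqF.
    have hi0 : 0 <= (Ng%:R : R)^-1 by rewrite invr_ge0; exact: ltW.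
    rewrite e1 normrM (ger0_norm hi0).
    rewrite ger0_norm ?subr_ge0 // -{2}(mul1r (Ng%:R^-1)).
    apply: ler_wpM2r => //.
    by move: hj2; rewrite -natr1; lra.
  have hLt : L * `|t - j%:R / Ng%:R| < e / 4.
    apply: le_lt_trans (ler_wpM2l (ltW L0) hdiff) _.
    by rewrite ltr_pdivrMr // mulrC.
  have g1 := Glip (D k) t (j%:R / Ng%:R) hk1.
  have g2 := Glip (D l) (j%:R / Ng%:R) t hl1.
  rewrite distrC in g2.
  have g3 := HNgr j jN k l (leq_trans (leq_maxl _ _) hk) (leq_trans (leq_maxl _ _) hl).
  have b1 := Gb _ _ hk1 ht; have b2 := Gb _ _ hk1 htj.
  have b3 := Gb _ _ hl1 htj; have b4 := Gb _ _ hl1 ht.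
  have t1' := ldist_tri b1 b2 b4.
  have t2' := ldist_tri b2 b3 b4.
  lra.
have Lim : forall t, exists x : linf R, 0 <= t <= 1 -> X x /\
    forall e, 0 < e -> exists N, forall k, (N <= k)%N -> ldist (G (D k) t) x < e.
  move=> t; case: (pselect (0 <= t <= 1)) => ht; last by exists (fun _ => 0).
  have hc : forall k, exists c, (c <= n (D k.+1))%N /\
      ldist (G (D k.+1) t) (p (D k.+1) c) <= Mesh (n (D k.+1)) (p (D k.+1)).
    by move=> k; exact: Gnode _ t (hD1 k.+1 isT) ht.
  have [c Hc] := choice hc.
  pose u k := p (D k.+1) (c k).
  have Xu : forall k, X (u k) by move=> k; exact: (Hn (D k.+1) (hD1 k.+1 isT)).2 (c k) (Hc k).1.
  have bu : forall k, bounded_seq (u k) by move=> k; exact: HXb.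
  have cu : forall e, 0 < e -> exists N, forall k l, (N <= k)%N -> (N <= l)%N ->
      ldist (u k) (u l) < e.
    move=> e e0; have e3 : 0 < e / 3 by apply: divr_gt0.
    have [N1 [_ HN1]] := UC _ e3.
    have [N2 HN2] := Mesh_small _ e3.
    exists (maxn N1 N2) => k l hk hl.
    have hk1 := hD1 k.+1 isT; have hl1 := hD1 l.+1 isT.
    have g := HN1 k.+1 l.+1 (leq_trans (leq_maxl _ _) (leqW hk)) (leq_trans (leq_maxl _ _) (leqW hl)) t ht.
    have m1 := HN2 (D k.+1) (leq_trans (leq_trans (leq_maxr _ _) (leqW hk)) (incr_ge hD _)).
    have m2 := HN2 (D l.+1) (leq_trans (leq_trans (leq_maxr _ _) (leqW hl)) (incr_ge hD _)).
    have c1 := (Hc k).2; have c2 := (Hc l).2.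
    have bg1 := Gb _ _ hk1 ht; have bg2 := Gb _ _ hl1 ht.
    have t1 := ldist_tri (bu k) bg1 (bu l).
    have t2 := ldist_tri bg1 bg2 (bu l).
    have e1 := ldistC (u k) (G (D k.+1) t).
    rewrite /u in t1 t2 e1 *.
    lra.
  have [x Xx Hx] := Hcomp u Xu cu.
  exists x => _; split => // e e0.
  have e2 : 0 < e / 2 by apply: divr_gt0.
  have [N3 HN3] := Hx _ e2.
  have [N4 HN4] := Mesh_small _ e2.
  exists (maxn N3.+1 N4); case=> [|k] hk.
    by move: (leq_trans (leq_maxl _ _) hk).
  have hk1 := hD1 k.+1 isT.
  have m1 := HN4 (D k.+1) (leq_trans (leq_trans (leq_maxr _ _) hk) (incr_ge hD _)).
  have h3 := HN3 k (leq_trans (leq_maxl _ _) hk).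
  have c1 := (Hc k).2.
  have t1 := ldist_tri (Gb _ _ hk1 ht) (bu k) (HXb _ Xx).
  rewrite /u in t1 h3.
  lra.
have [gam Hgam] := choice Lim.
exists D; split; first exact: hD.
exists gam; split; first split.
- by move=> t ht; exact: (Hgam t ht).1.
- move=> t ht e e0.
  have e3 : 0 < e / 3 by apply: divr_gt0.
  have L3 : 0 < 3 * L by apply: mulr_gt0.
  exists (e / (3 * L)); first by apply: divr_gt0.
  move=> s hs hst.
  have [Ns HNs] := (Hgam s hs).2 _ e3.
  have [Nt HNt] := (Hgam t ht).2 _ e3.
  pose k := maxn 1 (maxn Ns Nt).
  have hk1 : (1 <= D k)%N by apply: hD1; exact: leq_maxl.
  have a1 := HNs k (leq_trans (leq_maxl _ _) (leq_maxr _ _)).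
  have a2 := HNt k (leq_trans (leq_maxr _ _) (leq_maxr _ _)).
  have lip := Glip (D k) s t hk1.
  have hL : L * `|s - t| <= L * (e / (3 * L)) by apply: ler_wpM2l; [exact: ltW | exact: ltW].
  have eL : L * (e / (3 * L)) = e / 3 by field; rewrite gt_eqF.
  have bs := HXb _ (Hgam s hs).1; have bt := HXb _ (Hgam t ht).1.
  have bgs := Gb _ _ hk1 hs; have bgt := Gb _ _ hk1 ht.
  have t1 := ldist_tri bs bgs bt.
  have t2 := ldist_tri bgs bgt bt.
  have e1 := ldistC (gam s) (G (D k) s).
  lra.
split.
  move=> e e0.
  have e2 : 0 < e / 2 by apply: divr_gt0.
  have [N1 [N11 HN1]] := UC _ e2.
  exists N1 => i hi t ht.
  have [Nt HNt] := (Hgam t ht).2 _ e2.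
  pose l := maxn N1 Nt.
  have g1 := HN1 i l hi (leq_maxl _ _) t ht.
  have g2 := HNt l (leq_maxr _ _).
  have hi1 : (1 <= D i)%N by apply: hD1; exact: leq_trans hi.
  have hl1 : (1 <= D l)%N by apply: hD1; exact: leq_trans (leq_maxl _ _).
  have t1 := ldist_tri (Gb _ _ hi1 ht) (Gb _ _ hl1 ht) (HXb _ (Hgam t ht).1).
  change (ldist (G (D i) t) (gam t) < e).
  lra.
apply/cvg_eN => e e0; have [N HN] := HM e e0; exists N => i hi.
exact: HN (D i) (leq_trans hi (incr_ge hD i)).
Qed.
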